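(* There exists a finite set of points $X \subset \mathbb{R}^2$ together with a point $x \in X$ and a noncrossing tour $T$ through $X \setminus \{x\}$ (i.e., through all but one of the points) such that every noncrossing tour through all points of $X$ has length strictly less than $\ell(T)$.
   Context: For a finite set of points in $\mathbb{R}^2$, a tour is a Hamiltonian cycle on them; the length of an edge $\{a,b\}$ is the Euclidean distance $d(a,b)$ and $\ell(T)$ is the sum of the edge lengths of $T$. For an edge $e=\{a,b\}$, $L(e)$ denotes the closed line segment from $a$ to $b$. A tour is noncrossing if no two of its edges have intersecting line segments (other than at a shared endpoint). *)

(* Defs.v *)
From Stdlib Require Import Reals Lra Lia List Permutation.
Import ListNotations.
Open Scope R_scope.

Definition point := (R * R)%type.

Definition point_eq_dec : forall p q : point, {p = q} + {p <> q}.
Proof.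
  intros [a b] [c d].
  destruct (Req_EM_T a c) as [H1|H1]; destruct (Req_EM_T b d) as [H2|H2];
    subst; [left; reflexivity | right | right | right];
    intros H; inversion H; contradiction.
Defined.

Definition dist (a b : point) : R :=
  sqrt ((fst a - fst b) ^ 2 + (snd a - snd b) ^ 2).

Definition on_segment (a b p : point) : Prop :=
  exists s : R, 0 <= s <= 1 /\
    p = ((1 - s) * fst a + s * fst b, (1 - s) * snd a + s * snd b).

(* A tour is represented by a cyclic ordering t = [t_0; ...; t_{n-1}] of the
   points; its edges are {t_i, t_{(i+1) mod n}} for i < n. *)
Definition tour_edge (t : list point) (i : nat) : point * point :=
  (nth i t (0, 0), nth ((i + 1) mod length t) t (0, 0)).

Definition is_tour (S t : list point) : Prop :=
  NoDup t /\ Permutation t S /\ (3 <= length t)%nat.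

Definition tour_length (t : list point) : R :=
  fold_right Rplus 0
    (map (fun i => dist (fst (tour_edge t i)) (snd (tour_edge t i)))
         (seq 0 (length t))).

Definition noncrossing (t : list point) : Prop :=
  forall i j : nat, (i < length t)%nat -> (j < length t)%nat -> i <> j ->
    forall p : point,
      on_segment (fst (tour_edge t i)) (snd (tour_edge t i)) p ->
      on_segment (fst (tour_edge t j)) (snd (tour_edge t j)) p ->
      (p = fst (tour_edge t i) \/ p = snd (tour_edge t i)) /\
      (p = fst (tour_edge t j) \/ p = snd (tour_edge t j)).

(* Main.v *)
Require Import Defs.
From Stdlib Require Import Reals List Permutation Lra Lia ZArith Psatz.
Import ListNotations.


Open Scope R_scope.

Definition oR (a b c : point) : R :=
  (fst b - fst a) * (snd c - snd a) - (snd b - snd a) * (fst c - fst a).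

Lemma oR_seg a b c d p : on_segment a b p ->
  exists s, 0 <= s <= 1 /\ p = ((1 - s) * fst a + s * fst b, (1 - s) * snd a + s * snd b) /\
   oR c d p = (1 - s) * oR c d a + s * oR c d b.
Proof.
  intros [s [Hs Hp]]. exists s. split; [exact Hs|]. split; [exact Hp|].
  subst p. unfold oR. simpl. ring.
Qed.

Lemma oR_on a b p : on_segment a b p -> oR a b p = 0.
Proof.
  intros H. destruct (oR_seg a b a b p H) as [s [_ [_ E]]]. rewrite E.
  unfold oR. ring.
Qed.

Lemma sep1 a b c d p : oR a b c * oR a b d > 0 ->
  on_segment a b p -> on_segment c d p -> False.
Proof.
  intros H H1 H2. pose proof (oR_on _ _ _ H1) as E.
  destruct (oR_seg c d a b p H2) as [t [Ht [_ E2]]].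
  rewrite E in E2. set (u := oR a b c) in *. set (v := oR a b d) in *.
  assert (u * ((1 - t) * u + t * v) = 0) by (rewrite <- E2; ring).
  assert (u <> 0) by (intro Hu; rewrite Hu in H; lra).
  assert (0 < u * u) by nra.
  assert (0 <= (1 - t) * (u * u)) by nra.
  assert (0 <= t * (u * v)) by nra.
  assert ((1 - t) * (u * u) + t * (u * v) = 0) by nra.
  assert (Ea : t * (u * v) = 0) by lra.
  assert (Eb : (1 - t) * (u * u) = 0) by lra.
  apply Rmult_integral in Ea as [?|?]; [|lra].
  apply Rmult_integral in Eb as [?|?]; lra.
Qed.

Lemma sep2 a b c d p : oR c d a * oR c d b > 0 ->
  on_segment a b p -> on_segment c d p -> False.
Proof. intros H H1 H2. exact (sep1 c d a b p H H2 H1). Qed.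

Lemma adj1 a b d p : oR a b d <> 0 ->
  on_segment a b p -> on_segment b d p -> p = b.
Proof.
  intros H H1 H2. pose proof (oR_on _ _ _ H1) as E.
  destruct (oR_seg b d a b p H2) as [t [Ht [Hp E2]]].
  rewrite E in E2. assert (Hb: oR a b b = 0) by (unfold oR; ring).
  rewrite Hb in E2.
  assert (t = 0). { assert (E3 : t * oR a b d = 0) by lra.
    apply Rmult_integral in E3 as [?|?]; [lra|]. contradiction. }
  subst t. rewrite Hp. destruct b; simpl; f_equal; ring.
Qed.

Lemma adj2 a b c p : oR a b c <> 0 ->
  on_segment a b p -> on_segment c a p -> p = a.
Proof.
  intros H H1 H2. pose proof (oR_on _ _ _ H1) as E.
  destruct (oR_seg c a a b p H2) as [t [Ht [Hp E2]]].
  rewrite E in E2. assert (Hb: oR a b a = 0) by (unfold oR; ring).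
  rewrite Hb in E2.
  assert (t = 1). { assert (E3 : (1 - t) * oR a b c = 0) by lra.
    apply Rmult_integral in E3 as [?|?]; [lra|]. contradiction. }
  subst t. rewrite Hp. destruct a; simpl; f_equal; ring.
Qed.

Lemma div_nn x y : 0 <= x -> 0 < y -> 0 <= x / y.
Proof. intros. unfold Rdiv. apply Rmult_le_pos; [lra| left; apply Rinv_0_lt_compat; lra]. Qed.

Lemma cross_pt a b c d :
  oR c d a * oR c d b < 0 -> oR a b c * oR a b d < 0 ->
  exists p, on_segment a b p /\ on_segment c d p /\ p <> a /\ p <> b.
Proof.
  intros H1 H2.
  destruct a as [a1 a2], b as [b1 b2], c as [c1 c2], d as [d1 d2].
  set (o1 := oR (c1,c2) (d1,d2) (a1,a2)) in *.
  set (o2 := oR (c1,c2) (d1,d2) (b1,b2)) in *.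
  set (o3 := oR (a1,a2) (b1,b2) (c1,c2)) in *.
  set (o4 := oR (a1,a2) (b1,b2) (d1,d2)) in *.
  assert (N1 : o1 - o2 <> 0) by nra.
  assert (N2 : o3 - o4 <> 0) by nra.
  set (s := o1 / (o1 - o2)). set (t := o3 / (o3 - o4)).
  assert (Hs : 0 <= s <= 1).
  { unfold s. destruct (Rlt_dec 0 o1).
    - assert (o2 < 0) by nra. split.
      + apply div_nn; lra.
      + apply Rmult_le_reg_r with (o1 - o2); [lra|]. unfold Rdiv.
        rewrite Rmult_assoc, Rinv_l by lra. lra.
    - assert (o1 < 0) by nra. assert (0 < o2) by nra.
      replace (o1 / (o1 - o2)) with ((-o1) / (o2 - o1)) by (field; lra). split.
      + apply div_nn; lra.
      + apply Rmult_le_reg_r with (o2 - o1); [lra|]. unfold Rdiv.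
        rewrite Rmult_assoc, Rinv_l by lra. lra. }
  assert (Ht : 0 <= t <= 1).
  { unfold t. destruct (Rlt_dec 0 o3).
    - assert (o4 < 0) by nra. split.
      + apply div_nn; lra.
      + apply Rmult_le_reg_r with (o3 - o4); [lra|]. unfold Rdiv.
        rewrite Rmult_assoc, Rinv_l by lra. lra.
    - assert (o3 < 0) by nra. assert (0 < o4) by nra.
      replace (o3 / (o3 - o4)) with ((-o3) / (o4 - o3)) by (field; lra). split.
      + apply div_nn; lra.
      + apply Rmult_le_reg_r with (o4 - o3); [lra|]. unfold Rdiv.
        rewrite Rmult_assoc, Rinv_l by lra. lra. }
  set (p := ((1 - s) * a1 + s * b1, (1 - s) * a2 + s * b2)).
  assert (Hcd : on_segment (c1,c2) (d1,d2) p).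
  { exists t. split; [exact Ht|]. unfold p, s, t, o1, o2, o3, o4, oR; simpl.
    f_equal; field; unfold o1, o2, o3, o4, oR in N1, N2; simpl in N1, N2; auto. }
  exists p. split; [exists s; split; [exact Hs| reflexivity]|]. split; [exact Hcd|].
  pose proof (oR_on _ _ _ Hcd) as E.
  split; intro Ep; rewrite Ep in E; fold o1 in E; fold o2 in E; nra.
Qed.


Open Scope R_scope.
Open Scope bool_scope.

Definition zpt := (Z * Z)%type.
Definition inj (a : zpt) : point := (IZR (fst a), IZR (snd a)).
Definition oZ (a b c : zpt) : Z :=
  ((fst b - fst a) * (snd c - snd a) - (snd b - snd a) * (fst c - fst a))%Z.

Lemma oR_inj a b c : oR (inj a) (inj b) (inj c) = IZR (oZ a b c).
Proof.
  unfold oR, oZ, inj; simpl.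
  rewrite minus_IZR, !mult_IZR, !minus_IZR. reflexivity.
Qed.

Lemma inj_inj : FinFun.Injective inj.
Proof.
  intros [a b] [c d] H. unfold inj in H; simpl in H. inversion H.
  apply eq_IZR in H1. apply eq_IZR in H2. subst; reflexivity.
Qed.

Definition z0 : zpt := (0%Z, 0%Z).
Definition edgeZ (tz : list zpt) (i : nat) : zpt * zpt :=
  (nth i tz z0, nth ((i + 1) mod length tz) tz z0).

Lemma tour_edge_map tz i :
  tour_edge (map inj tz) i = (inj (fst (edgeZ tz i)), inj (snd (edgeZ tz i))).
Proof.
  unfold tour_edge, edgeZ. rewrite length_map. simpl.
  change (0, 0) with (inj z0). rewrite !map_nth. reflexivity.
Qed.

Definition zeq (p q : zpt) : bool := Z.eqb (fst p) (fst q) && Z.eqb (snd p) (snd q).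
Lemma zeq_true p q : zeq p q = true -> p = q.
Proof.
  destruct p, q; unfold zeq; simpl; intros H. apply andb_prop in H as [H1 H2].
  apply Z.eqb_eq in H1; apply Z.eqb_eq in H2; subst; reflexivity.
Qed.

Definition properZ (e f : zpt * zpt) : bool :=
  let (a, b) := e in let (c, d) := f in
  (oZ c d a * oZ c d b <? 0)%Z && (oZ a b c * oZ a b d <? 0)%Z.

Definition goodZ (e f : zpt * zpt) : bool :=
  let (a, b) := e in let (c, d) := f in
  (0 <? oZ a b c * oZ a b d)%Z || (0 <? oZ c d a * oZ c d b)%Z ||
  (zeq b c && negb (oZ a b d =? 0)%Z) || (zeq a d && negb (oZ a b c =? 0)%Z).

Definition crossb (tz : list zpt) : bool :=
  existsb (fun i => existsb (fun j => properZ (edgeZ tz i) (edgeZ tz j))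
    (seq (S i) (length tz - S i))) (seq 0 (length tz)).

Definition ncb (tz : list zpt) : bool :=
  forallb (fun i => forallb (fun j => Nat.eqb i j || goodZ (edgeZ tz i) (edgeZ tz j))
    (seq 0 (length tz))) (seq 0 (length tz)).

Lemma crossb_sound tz : crossb tz = true -> ~ noncrossing (map inj tz).
Proof.
  unfold crossb. intros H Hn.
  apply existsb_exists in H as [i [Hi H]]. apply existsb_exists in H as [j [Hj H]].
  apply in_seq in Hi. apply in_seq in Hj.
  assert (Hij : i <> j) by lia.
  unfold properZ in H. destruct (edgeZ tz i) as [a b] eqn:Ei.
  destruct (edgeZ tz j) as [c d] eqn:Ej.
  apply andb_prop in H as [H1 H2]. apply Z.ltb_lt in H1. apply Z.ltb_lt in H2.
  assert (K1 : oR (inj c) (inj d) (inj a) * oR (inj c) (inj d) (inj b) < 0).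
  { rewrite !oR_inj, <- mult_IZR. apply IZR_lt. exact H1. }
  assert (K2 : oR (inj a) (inj b) (inj c) * oR (inj a) (inj b) (inj d) < 0).
  { rewrite !oR_inj, <- mult_IZR. apply IZR_lt. exact H2. }
  destruct (cross_pt _ _ _ _ K1 K2) as [p [P1 [P2 [P3 P4]]]].
  specialize (Hn i j ltac:(rewrite length_map; lia) ltac:(rewrite length_map; lia) Hij p).
  rewrite !tour_edge_map, Ei, Ej in Hn. simpl in Hn.
  destruct (Hn P1 P2) as [[?|?] _]; contradiction.
Qed.

Lemma ncb_sound tz : ncb tz = true -> noncrossing (map inj tz).
Proof.
  unfold ncb. intros H i j Hi Hj Hij p.
  rewrite length_map in Hi, Hj.
  rewrite forallb_forall in H. specialize (H i ltac:(apply in_seq; lia)).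
  rewrite forallb_forall in H. specialize (H j ltac:(apply in_seq; lia)).
  apply Nat.eqb_neq in Hij. rewrite Hij, Bool.orb_false_l in H.
  rewrite !tour_edge_map.
  destruct (edgeZ tz i) as [a b]. destruct (edgeZ tz j) as [c d]. simpl.
  unfold goodZ in H.
  intros P1 P2.
  apply Bool.orb_true_iff in H as [H|H]; [apply Bool.orb_true_iff in H as [H|H]|];
    [apply Bool.orb_true_iff in H as [H|H]| |].
  - apply Z.ltb_lt in H. exfalso. apply (sep1 (inj a) (inj b) (inj c) (inj d) p); [|exact P1|exact P2].
    rewrite !oR_inj, <- mult_IZR. apply IZR_lt. exact H.
  - apply Z.ltb_lt in H. exfalso. apply (sep2 (inj a) (inj b) (inj c) (inj d) p); [|exact P1|exact P2].
    rewrite !oR_inj, <- mult_IZR. apply IZR_lt. exact H.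
  - apply andb_prop in H as [E H]. apply zeq_true in E. subst c.
    apply Bool.negb_true_iff in H. apply Z.eqb_neq in H.
    assert (oR (inj a) (inj b) (inj d) <> 0) by (rewrite oR_inj; apply not_0_IZR; exact H).
    pose proof (adj1 _ _ _ p H0 P1 P2). auto.
  - apply andb_prop in H as [E H]. apply zeq_true in E. subst d.
    apply Bool.negb_true_iff in H. apply Z.eqb_neq in H.
    assert (oR (inj a) (inj b) (inj c) <> 0) by (rewrite oR_inj; apply not_0_IZR; exact H).
    pose proof (adj2 _ _ _ p H0 P1 P2). auto.
Qed.


Open Scope R_scope.
Open Scope bool_scope.

Definition d2Z (e : zpt * zpt) : Z :=
  let (a, b) := e in
  ((fst a - fst b) * (fst a - fst b) + (snd a - snd b) * (snd a - snd b))%Z.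
Definition ubZ e := (Z.sqrt (d2Z e) + 1)%Z.
Definition lbZ e := Z.sqrt (d2Z e).

Lemma dist_inj a b : Defs.dist (inj a) (inj b) = sqrt (IZR (d2Z (a, b))).
Proof.
  unfold Defs.dist, inj, d2Z; simpl. f_equal.
  rewrite plus_IZR, !mult_IZR, !minus_IZR. ring.
Qed.

Lemma d2Z_nn e : (0 <= d2Z e)%Z.
Proof. destruct e as [a b]; unfold d2Z. pose proof (Z.square_nonneg (fst a - fst b)). pose proof (Z.square_nonneg (snd a - snd b)). lia. Qed.

Lemma dist_ub a b : Defs.dist (inj a) (inj b) <= IZR (ubZ (a, b)).
Proof.
  rewrite dist_inj. unfold ubZ. pose proof (Z.sqrt_spec _ (d2Z_nn (a, b))) as [_ H].
  pose proof (Z.sqrt_nonneg (d2Z (a, b))).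
  set (k := Z.sqrt (d2Z (a, b))) in *.
  rewrite <- (sqrt_square (IZR (k + 1))) by (apply IZR_le; lia).
  apply sqrt_le_1_alt. rewrite <- mult_IZR. apply IZR_le. rewrite <- Z.add_1_r in H. lia.
Qed.

Lemma dist_lb a b : IZR (lbZ (a, b)) <= Defs.dist (inj a) (inj b).
Proof.
  rewrite dist_inj. unfold lbZ. pose proof (Z.sqrt_spec _ (d2Z_nn (a, b))) as [H _].
  pose proof (Z.sqrt_nonneg (d2Z (a, b))).
  set (k := Z.sqrt (d2Z (a, b))) in *.
  rewrite <- (sqrt_square (IZR k)) by (apply IZR_le; lia).
  apply sqrt_le_1_alt. rewrite <- mult_IZR. apply IZR_le. lia.
Qed.

Definition sumZ (f : zpt * zpt -> Z) (tz : list zpt) : Z :=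
  fold_right Z.add 0%Z (map (fun i => f (edgeZ tz i)) (seq 0 (length tz))).

Lemma tour_length_map tz : tour_length (map inj tz) =
  fold_right Rplus 0 (map (fun i => Defs.dist (inj (fst (edgeZ tz i))) (inj (snd (edgeZ tz i))))
    (seq 0 (length tz))).
Proof.
  unfold tour_length. rewrite length_map. f_equal. apply map_ext. intros i.
  rewrite tour_edge_map. reflexivity.
Qed.

Lemma fold_le (fR : nat -> R) (fZ : nat -> Z) l :
  (forall i, fR i <= IZR (fZ i)) ->
  fold_right Rplus 0 (map fR l) <= IZR (fold_right Z.add 0%Z (map fZ l)).
Proof.
  intros H. induction l; simpl; [lra|]. rewrite plus_IZR. specialize (H a). lra.
Qed.

Lemma fold_ge (fR : nat -> R) (fZ : nat -> Z) l :
  (forall i, IZR (fZ i) <= fR i) ->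
  IZR (fold_right Z.add 0%Z (map fZ l)) <= fold_right Rplus 0 (map fR l).
Proof.
  intros H. induction l; simpl; [lra|]. rewrite plus_IZR. specialize (H a). lra.
Qed.

Lemma len_ub tz : tour_length (map inj tz) <= IZR (sumZ ubZ tz).
Proof.
  rewrite tour_length_map. unfold sumZ. apply fold_le. intros i.
  destruct (edgeZ tz i) as [a b]. apply dist_ub.
Qed.

Lemma len_lb tz : IZR (sumZ lbZ tz) <= tour_length (map inj tz).
Proof.
  rewrite tour_length_map. unfold sumZ. apply fold_ge. intros i.
  destruct (edgeZ tz i) as [a b]. apply dist_lb.
Qed.

Fixpoint inserts {A} (a : A) (l : list A) : list (list A) :=
  match l with
  | [] => [[a]]
  | b :: l' => (a :: b :: l') :: map (cons b) (inserts a l')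
  end.
Fixpoint perms {A} (l : list A) : list (list A) :=
  match l with
  | [] => [[]]
  | a :: l' => flat_map (inserts a) (perms l')
  end.

Lemma inserts_in {A} (a : A) l1 l2 : In (l1 ++ a :: l2) (inserts a (l1 ++ l2)).
Proof.
  induction l1; simpl.
  - destruct l2; simpl; auto.
  - right. apply in_map. exact IHl1.
Qed.

Lemma perms_complete {A} (m l : list A) : Permutation l m -> In l (perms m).
Proof.
  revert l. induction m as [|a m IH]; intros l H.
  - apply Permutation_sym, Permutation_nil in H. subst. simpl. auto.
  - assert (Ha : In a l) by (apply Permutation_in with (a :: m); [apply Permutation_sym; exact H| left; reflexivity]).
    apply in_split in Ha as [l1 [l2 E]]. subst l.
    assert (P : Permutation (l1 ++ l2) m).
    { apply Permutation_sym. apply Permutation_cons_app_inv with a. apply Permutation_sym. exact H. }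
    simpl. apply in_flat_map. exists (l1 ++ l2). split; [apply IH; exact P|].
    apply inserts_in.
Qed.

Lemma inserts_sound {A} (a : A) k l : In l (inserts a k) -> Permutation l (a :: k).
Proof.
  revert l. induction k as [|b k IH]; simpl; intros l H.
  - destruct H as [H|[]]. subst. auto.
  - destruct H as [H|H]; [subst; auto|].
    apply in_map_iff in H as [l' [E H]]. subst l.
    apply IH in H. eapply perm_trans; [apply perm_skip; exact H|]. apply perm_swap.
Qed.

Lemma perms_sound {A} (m l : list A) : In l (perms m) -> Permutation l m.
Proof.
  revert l. induction m as [|a m IH]; simpl; intros l H.
  - destruct H as [H|[]]. subst. auto.
  - apply in_flat_map in H as [k [Hk H]]. apply inserts_sound in H.
    eapply perm_trans; [exact H|]. apply perm_skip. apply IH. exact Hk.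
Qed.


Open Scope nat_scope.

Lemma succ_mod i n : (i < n)%nat -> ((i + 1) mod n = i + 1 /\ (i + 1 < n)%nat) \/ (i + 1 = n /\ (i + 1) mod n = 0)%nat.
Proof.
  intros H. destruct (Nat.eq_dec (i + 1) n) as [E|E].
  - right. split; [exact E|]. rewrite E. apply Nat.Div0.mod_same.
  - left. split; [apply Nat.mod_small; lia| lia].
Qed.

Lemma nth_rot (a : point) l i d : (i < S (length l))%nat ->
  nth i (l ++ [a]) d = nth ((i + 1) mod S (length l)) (a :: l) d.
Proof.
  intros H. destruct (succ_mod i (S (length l)) H) as [[E1 E2]|[E1 E2]].
  - rewrite E1. rewrite app_nth1 by lia. replace (i + 1)%nat with (S i) by lia. reflexivity.
  - rewrite E2. simpl. rewrite app_nth2 by lia. replace (i - length l)%nat with 0%nat by lia. reflexivity.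
Qed.

Lemma tour_edge_rot (a : point) l i : (i < S (length l))%nat ->
  tour_edge (l ++ [a]) i = tour_edge (a :: l) ((i + 1) mod S (length l)).
Proof.
  intros H. unfold tour_edge.
  replace (length (l ++ [a])) with (S (length l)) by (rewrite length_app; simpl; lia).
  replace (length (a :: l)) with (S (length l)) by reflexivity.
  rewrite nth_rot by exact H. f_equal.
  apply nth_rot. apply Nat.mod_upper_bound. lia.
Qed.

Lemma mod_inj i j n : (i < n)%nat -> (j < n)%nat -> (i + 1) mod n = (j + 1) mod n -> i = j.
Proof.
  intros Hi Hj E.
  destruct (succ_mod i n Hi) as [[A1 A2]|[A1 A2]]; destruct (succ_mod j n Hj) as [[B1 B2]|[B1 B2]]; lia.
Qed.

Lemma noncrossing_rot (a : point) l : noncrossing (a :: l) -> noncrossing (l ++ [a]).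
Proof.
  intros H i j Hi Hj Hij p.
  assert (Hn : length (l ++ [a]) = S (length l)) by (rewrite length_app; simpl; lia).
  rewrite Hn in Hi, Hj.
  rewrite !tour_edge_rot by assumption.
  apply H.
  - apply Nat.mod_upper_bound; simpl; lia.
  - apply Nat.mod_upper_bound; simpl; lia.
  - intro E. apply Hij. apply (mod_inj _ _ _ Hi Hj E).
Qed.

Lemma sum_app (l1 l2 : list R) : fold_right Rplus 0%R (l1 ++ l2) = (fold_right Rplus 0%R l1 + fold_right Rplus 0%R l2)%R.
Proof. induction l1; simpl; [ring| rewrite IHl1; ring]. Qed.

Lemma sum_shift (h : nat -> R) n : (0 < n)%nat ->
  fold_right Rplus 0%R (map (fun i => h ((i + 1) mod n)) (seq 0 n)) = fold_right Rplus 0%R (map h (seq 0 n)).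
Proof.
  intros Hn. destruct n as [|m]; [lia|].
  rewrite (map_ext_in _ (fun i => if Nat.eqb i m then h 0%nat else h (S i))).
  2:{ intros i Hi. apply in_seq in Hi. destruct (Nat.eqb_spec i m).
      - subst. rewrite Nat.add_1_r, Nat.Div0.mod_same. reflexivity.
      - rewrite Nat.mod_small by lia. f_equal. lia. }
  rewrite seq_S, map_app, sum_app. simpl. rewrite Nat.eqb_refl.
  rewrite (map_ext_in _ (fun i => h (S i))).
  2:{ intros i Hi. apply in_seq in Hi. destruct (Nat.eqb_spec i m); [lia|reflexivity]. }
  rewrite <- (map_map S h), seq_shift. replace (seq 0 m ++ [m]) with (seq 0 (S m)) by (rewrite seq_S; reflexivity). simpl. lra.
Qed.

Lemma tour_length_rot (a : point) l : tour_length (l ++ [a]) = tour_length (a :: l).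
Proof.
  unfold tour_length.
  replace (length (l ++ [a])) with (S (length l)) by (rewrite length_app; simpl; lia).
  replace (length (a :: l)) with (S (length l)) by reflexivity.
  rewrite (map_ext_in _ (fun i => (fun k => Defs.dist (fst (tour_edge (a :: l) k)) (snd (tour_edge (a :: l) k))) ((i + 1) mod S (length l)))).
  2:{ intros i Hi. apply in_seq in Hi. rewrite tour_edge_rot by lia. reflexivity. }
  apply (sum_shift (fun k => Defs.dist (fst (tour_edge (a :: l) k)) (snd (tour_edge (a :: l) k)))). lia.
Qed.

Lemma rotate_front (x : point) l1 l2 :
  noncrossing (l1 ++ x :: l2) ->
  noncrossing (x :: l2 ++ l1) /\ tour_length (x :: l2 ++ l1) = tour_length (l1 ++ x :: l2).
Proof.
  revert l2. induction l1 as [|b l1 IH]; intros l2 H.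
  - rewrite app_nil_r. simpl in *. auto.
  - simpl in H. apply noncrossing_rot in H.
    rewrite <- app_assoc in H. simpl in H.
    destruct (IH (l2 ++ [b]) H) as [H1 H2].
    rewrite <- app_assoc in H1, H2. simpl in H1, H2. split; [exact H1|].
    rewrite H2. simpl. rewrite <- tour_length_rot, <- app_assoc. reflexivity.
Qed.


Open Scope R_scope.
Open Scope bool_scope.

Definition Qz : list zpt := [(46,46); (-5,29); (36,16); (35,33); (51,55); (37,-11); (4,0); (54,54)]%Z.
Definition xz : zpt := (36,32)%Z.
Definition Tz : list zpt := [(46,46); (-5,29); (51,55); (36,16); (54,54); (37,-11); (35,33); (4,0)]%Z.

Lemma check_all : forallb (fun rz => crossb (xz :: rz) || (sumZ ubZ (xz :: rz) <? sumZ lbZ Tz)%Z) (perms Qz) = true.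
Proof. vm_compute. reflexivity. Qed.

Lemma nodup_X : NoDup (xz :: Qz).
Proof.
  unfold xz, Qz. repeat constructor; simpl; intros H; repeat destruct H as [H|H]; try discriminate; exact H.
Qed.

Lemma nodup_T : NoDup Tz.
Proof.
  unfold Tz. repeat constructor; simpl; intros H; repeat destruct H as [H|H]; try discriminate; exact H.
Qed.

Lemma perm_T : Permutation Tz Qz.
Proof.
  apply NoDup_Permutation; [apply nodup_T| |].
  - pose proof nodup_X as H. inversion H; assumption.
  - intros x. unfold Tz, Qz. simpl. split; intros H; repeat destruct H as [H|H]; subst; auto 20.
Qed.

Theorem theorem2 :
  exists X : list point, NoDup X /\
  exists x : point, In x X /\
  exists T : list point,
    is_tour (remove point_eq_dec x X) T /\ noncrossing T /\
    forall T' : list point, is_tour X T' -> noncrossing T' ->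
      tour_length T' < tour_length T.
Proof.
  exists (map inj (xz :: Qz)). split.
  { apply FinFun.Injective_map_NoDup; [apply inj_inj| apply nodup_X]. }
  exists (inj xz). split; [left; reflexivity|].
  exists (map inj Tz).
  assert (Hrem : remove point_eq_dec (inj xz) (map inj (xz :: Qz)) = map inj Qz).
  { change (map inj (xz :: Qz)) with (inj xz :: map inj Qz). rewrite remove_cons.
    apply notin_remove. intros H. apply in_map_iff in H as [q [E H]].
    apply inj_inj in E. subst q. pose proof nodup_X as N. inversion N. contradiction. }
  rewrite Hrem. split; [|split].
  - split; [|split].
    + apply FinFun.Injective_map_NoDup; [apply inj_inj| apply nodup_T].
    + apply Permutation_map. apply perm_T.
    + simpl. lia.
  - apply ncb_sound. vm_compute. reflexivity.
  - intros T' [HN [HP HL]] HNC.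
    assert (Hx : In (inj xz) T').
    { apply Permutation_in with (map inj (xz :: Qz)); [apply Permutation_sym; exact HP| left; reflexivity]. }
    apply in_split in Hx as [l1 [l2 E]]. subst T'.
    destruct (rotate_front _ _ _ HNC) as [HNC2 HLen].
    rewrite <- HLen.
    assert (HP2 : Permutation (l2 ++ l1) (map inj Qz)).
    { apply Permutation_cons_inv with (inj xz).
      change (inj xz :: map inj Qz) with (map inj (xz :: Qz)).
      eapply perm_trans; [|exact HP].
      rewrite app_comm_cons. apply Permutation_app_comm. }
    apply Permutation_map_inv in HP2 as [rz [E2 HP3]].
    rewrite E2 in *. change (inj xz :: map inj rz) with (map inj (xz :: rz)) in *.
    assert (Hin : In rz (perms Qz)) by (apply perms_complete, Permutation_sym; exact HP3).
    pose proof check_all as C. rewrite forallb_forall in C. specialize (C rz Hin).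
    apply Bool.orb_true_iff in C as [C|C].
    + exfalso. exact (crossb_sound _ C HNC2).
    + apply Z.ltb_lt in C. apply IZR_lt in C.
      pose proof (len_ub (xz :: rz)). pose proof (len_lb Tz). lra.
Qed.
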